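(* Let $(X,d)$ be a pointed metric space and let $((x_i,y_i))_{i\in I}$ be a Lipschitz interpolating family in $\widetilde X$ for $\mathrm{Lip}_0(X)$ with Lipschitz interpolation constant $M$. Then for all $i,j\in I$ with $i\neq j$, $$\|m_{x_i,y_i}-m_{x_j,y_j}\|\geq \frac{1}{M},$$ the norm being that of $\mathcal F(X)$ (equivalently of $\mathrm{Lip}_0(X)^*$).
   Context: All spaces are real. $(X,d)$ is a metric space with base point $0$, $\widetilde{X}=\{(x,y)\in X\times X: x\neq y\}$. $\mathrm{Lip}_0(X)$ is the Banach space of Lipschitz $f:X\to\mathbb{R}$ with $f(0)=0$, normed by $\|f\|=\sup_{(x,y)\in\widetilde X}|f(x)-f(y)|/d(x,y)$. For $x\in X$, $\delta_x\in\mathrm{Lip}_0(X)^*$ is $\delta_x(f)=f(x)$; $\mathcal F(X)$ is the closed linear span of $\{\delta_x\}$ in $\mathrm{Lip}_0(X)^*$; for $(x,y)\in\widetilde X$, $m_{x,y}=(\delta_x-\delta_y)/d(x,y)$. For a family $((x_i,y_i))_{i\in I}$ in $\widetilde X$, $T:\mathrm{Lip}_0(X)\to\ell_\infty(I)$, $T(f)=\big((f(x_i)-f(y_i))/d(x_i,y_i)\big)_{i\in I}$; the family is Lipschitz interpolating for $\mathrm{Lip}_0(X)$ if $T$ is surjective, and then its Lipschitz interpolation constant is $M=\inf\{K\geq 1: \forall \alpha\in\ell_\infty(I), \|\alpha\|_\infty\le1,\ \exists f\in\mathrm{Lip}_0(X),\ \|f\|\le K,\ T(f)=\alpha\}$.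 *)

(* Defs.v *)
From Stdlib Require Import Reals.
Open Scope R_scope.

Definition is_metric {X : Type} (d : X -> X -> R) : Prop :=
  (forall x y, 0 <= d x y) /\
  (forall x y, d x y = 0 <-> x = y) /\
  (forall x y, d x y = d y x) /\
  (forall x y z, d x z <= d x y + d y z).

Definition Lip0 {X : Type} (d : X -> X -> R) (x0 : X) (f : X -> R) : Prop :=
  f x0 = 0 /\ exists L, forall a b, Rabs (f a - f b) <= L * d a b.

Definition lip_norm_le {X : Type} (d : X -> X -> R) (f : X -> R) (K : R) : Prop :=
  forall a b, a <> b -> Rabs (f a - f b) / d a b <= K.

Definition mol {X : Type} (d : X -> X -> R) (x y : X) (f : X -> R) : R :=
  (f x - f y) / d x y.

(* The family ((x i, y i))_{i in I} is Lipschitz interpolating for Lip_0(X):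
   T : Lip_0(X) -> l_infty(I) is surjective. *)
Definition lip_interpolating {X I : Type} (d : X -> X -> R) (x0 : X)
  (x y : I -> X) : Prop :=
  forall alpha : I -> R, (exists B, forall i, Rabs (alpha i) <= B) ->
    exists f, Lip0 d x0 f /\ forall i, mol d (x i) (y i) f = alpha i.

(* The set of admissible constants K in the definition of the
   Lipschitz interpolation constant M (which is the infimum of this set). *)
Definition interp_constants {X I : Type} (d : X -> X -> R) (x0 : X)
  (x y : I -> X) (K : R) : Prop :=
  1 <= K /\
  forall alpha : I -> R, (forall i, Rabs (alpha i) <= 1) ->
    exists f, Lip0 d x0 f /\ lip_norm_le d f K /\
      forall i, mol d (x i) (y i) f = alpha i.

(* The set {|phi(f)| : f in Lip_0(X), ||f|| <= 1} whose supremum is the dual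
   norm of phi = m_{x1,y1} - m_{x2,y2} in Lip_0(X)^*. *)
Definition dual_vals {X : Type} (d : X -> X -> R) (x0 : X)
  (x1 y1 x2 y2 : X) (t : R) : Prop :=
  exists f, Lip0 d x0 f /\ lip_norm_le d f 1 /\
    t = Rabs (mol d x1 y1 f - mol d x2 y2 f).

Definition is_inf (E : R -> Prop) (M : R) : Prop :=
  (forall K, E K -> M <= K) /\ (forall m, (forall K, E K -> m <= K) -> m <= M).

(* Main.v *)
Require Import Defs.
From Stdlib Require Import Reals Lra Classical ClassicalDescription.
Open Scope R_scope.

Theorem proposition3p20 (X : Type) (d : X -> X -> R) (x0 : X)
  (I : Type) (x y : I -> X) (M : R)
  (Hd : is_metric d)
  (Hxy : forall i, x i <> y i)
  (Hinterp : lip_interpolating d x0 x y)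
  (HM : is_inf (interp_constants d x0 x y) M) :
  forall i j : I, i <> j ->
  forall N : R, is_lub (dual_vals d x0 (x i) (y i) (x j) (y j)) N ->
  N >= 1 / M.
Proof.
  intros i j Hij N [HNub HNl].
  destruct HM as [HMlb HMgl].
  assert (key : forall K, interp_constants d x0 x y K -> 1 / K <= N).
  { intros K [HK1 HK].
    set (alpha := fun k => if excluded_middle_informative (k = i) then 1 else 0).
    destruct (HK alpha) as [f [[Hf0 [L HL]] [Hfn Hfm]]].
    { intro k; unfold alpha; destruct (excluded_middle_informative (k = i));
      rewrite ?Rabs_R1, ?Rabs_R0; lra. }
    assert (Hai : alpha i = 1).
    { unfold alpha; destruct (excluded_middle_informative (i = i)); congruence. }
    assert (Haj : alpha j = 0).
    { unfold alpha; destruct (excluded_middle_informative (j = i)); congruence. }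
    apply HNub. exists (fun z => f z / K).
    assert (HKp : 0 < K) by lra.
    split; [split|split].
    - rewrite Hf0; unfold Rdiv; ring.
    - exists (L / K). intros a b.
      replace (f a / K - f b / K) with ((f a - f b) * / K) by (field; lra).
      rewrite Rabs_mult, Rabs_inv, (Rabs_right K) by lra.
      specialize (HL a b).
      replace (L / K * d a b) with ((L * d a b) * / K) by (field; lra).
      apply Rmult_le_compat_r; [left; apply Rinv_0_lt_compat; lra | exact HL].
    - intros a b Hab. specialize (Hfn a b Hab).
      assert (Hdp : 0 < d a b).
      { destruct Hd as [H0 [H1 _]]. destruct (H0 a b) as [|E]; auto.
        exfalso; apply Hab; apply H1; auto. }
      replace (f a / K - f b / K) with ((f a - f b) * / K) by (field; lra).
      rewrite Rabs_mult, Rabs_inv, (Rabs_right K) by lra.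
      unfold Rdiv in *.
      replace (Rabs (f a - f b) * / K * / d a b) with ((Rabs (f a - f b) * / d a b) * / K) by ring.
      apply Rmult_le_reg_r with K; auto.
      rewrite Rmult_assoc, Rinv_l by lra. lra.
    - pose proof (Hfm i) as Hi. pose proof (Hfm j) as Hj.
      rewrite Hai in Hi; rewrite Haj in Hj.
      unfold mol in *.
      assert (E1 : (f (x i) / K - f (y i) / K) / d (x i) (y i) = 1 / K).
      { rewrite <- Hi. unfold Rdiv. ring. }
      assert (E2 : (f (x j) / K - f (y j) / K) / d (x j) (y j) = 0).
      { replace ((f (x j) / K - f (y j) / K) / d (x j) (y j)) with
          ((f (x j) - f (y j)) / d (x j) (y j) * / K) by (unfold Rdiv; ring).
        rewrite Hj; ring. }
      rewrite E1, E2, Rminus_0_r, Rabs_right; auto.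
      apply Rle_ge; left; apply Rdiv_lt_0_compat; lra. }
  assert (Hne : exists K, interp_constants d x0 x y K).
  { destruct (classic (exists K, interp_constants d x0 x y K)) as [H|H]; auto.
    exfalso. assert (M + 1 <= M) by (apply HMgl; intros K HK; exfalso; apply H; eauto). lra. }
  destruct Hne as [K0 HK0].
  assert (HM1 : 1 <= M) by (apply HMgl; intros K [HK _]; exact HK).
  assert (HN : 0 < N).
  { pose proof (key K0 HK0). destruct HK0 as [HK0 _].
    assert (0 < 1 / K0) by (apply Rdiv_lt_0_compat; lra). lra. }
  assert (H1N : 1 / N <= M).
  { apply HMgl. intros K HK. pose proof (key K HK) as HkK.
    destruct HK as [HK _].
    apply Rmult_le_reg_r with N; auto.
    apply Rmult_le_reg_l with (/ K); [apply Rinv_0_lt_compat; lra|].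
    replace (/ K * (1 / N * N)) with (1 / K) by (field; lra).
    replace (/ K * (K * N)) with N by (field; lra). exact HkK. }
  apply Rle_ge.
  apply Rmult_le_reg_r with M; [lra|].
  apply Rmult_le_reg_l with (/ N); [apply Rinv_0_lt_compat; lra|].
  replace (/ N * (1 / M * M)) with (1 / N) by (field; lra).
  replace (/ N * (N * M)) with M by (field; lra). exact H1N.
Qed.
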